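(* Let $G$ be a finite group with $Z(G)\neq 1$ and $\mathcal{D}(G/Z(G))=2$. Then $\mathcal{D}(G)-\mathcal{D}(Z(G))\ge 4$.
   Context: $\mathcal{D}(X)$ denotes the number of conjugacy classes of nontrivial subgroups $Y$ of the finite group $X$ with $N_X(Y)\neq Y$. $Z(G)$ is the center of $G$. *)

(* Defs.v *)
From mathcomp Require Import all_boot all_fingroup all_solvable.
Set Implicit Arguments. Unset Strict Implicit. Unset Printing Implicit Defensive.
Local Open Scope group_scope.

Definition nsn_subgroups (gT : finGroupType) (X : {set gT}) : {set {set gT}} :=
  [set Y : {set gT} | [&& group_set Y, Y \subset X, Y != 1 & 'N_X(Y) != Y]].

Definition calD (gT : finGroupType) (X : {set gT}) : nat :=
  #|[set Y :^: X | Y in nsn_subgroups X]|.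

(* Main.v *)
Require Import Defs.
From mathcomp Require Import all_boot all_fingroup all_solvable.
Set Implicit Arguments. Unset Strict Implicit. Unset Printing Implicit Defensive.
Local Open Scope group_scope.

Lemma conj_mem (gT : finGroupType) (A : {set gT}) (G : {group gT}) : A \in A :^: G.
Proof. by apply/imsetP; exists 1; rewrite ?group1 ?conjsg1. Qed.

Lemma conj_norm (gT : finGroupType) (A B : {set gT}) (G : {group gT}) :
  G \subset 'N(A) -> B \in A :^: G -> B = A.
Proof. by move=> nAG /imsetP[g gG ->]; apply/normP/(subsetP nAG). Qed.

Lemma conj_eq (gT : finGroupType) (A B : {set gT}) (G : {group gT}) :
  B \in A :^: G -> B :^: G = A :^: G.
Proof. by case/imsetP=> g gG ->; rewrite conjugates_conj lcoset_id. Qed.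

Lemma calD1 (gT : finGroupType) : calD [1 gT] = 0.
Proof.
apply/eqP; rewrite cards_eq0; apply/eqP/setP=> c; rewrite inE.
apply/negbTE/negP; case/imsetP=> Y; rewrite inE => /and4P[gY sY1 ntY _] _.
case/andP: gY => Y1 _.
by rewrite eqEsubset sY1 sub1set Y1 in ntY.
Qed.

Lemma normal_nsn (gT : finGroupType) (H A : {group gT}) :
  A <| H -> A \proper H -> A :!=: 1 -> gval A \in nsn_subgroups H.
Proof.
move=> nAH pAH ntA; rewrite inE groupP (proper_sub pAH) ntA /=.
rewrite (setIidPl (normal_norm nAH)).
by apply/eqP=> eHA; move: pAH; rewrite eHA properE subxx.
Qed.

Lemma calD_ge3 (gT : finGroupType) (H A B C : {group gT}) :
  A <| H -> B <| H -> C <| H -> A \proper H -> B \proper H -> C \proper H ->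
  A :!=: 1 -> B :!=: 1 -> C :!=: 1 -> A :!=: B -> B :!=: C -> C :!=: A ->
  2 < calD H.
Proof.
move=> nA nB nC pA pB pC tA tB tC dAB dBC dCA.
have dist (X Y : {group gT}) : X <| H -> Y <| H -> X :!=: Y -> X :^: H != Y :^: H.
  move=> nX nY dXY; apply/eqP=> e.
  have := conj_mem X H; rewrite e => /(conj_norm (normal_norm nY)) eXY.
  by rewrite eXY eqxx in dXY.
apply/card_gt2P; exists (A :^: H), (B :^: H), (C :^: H); split.
  by split; apply: imset_f; apply: normal_nsn.
by split; apply: dist.
Qed.

Lemma pgroup_noncyclic (gT : finGroupType) (p : nat) (H : {group gT}) :
  p.-group H -> ~~ cyclic H -> 2 < calD H.
Proof.
move=> pH ncH.
have ntH : H :!=: 1 by apply: contra ncH => /eqP ->; exact: cyclic1.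
have [p_pr _ _] := pgroup_pdiv pH ntH.
have [e1H | [M1 max1 _]] := maximal_exists (sub1G H).
  by rewrite -e1H eqxx in ntH.
have pM1 : M1 \proper H := maxgroupp max1.
have [_ [x Hx xM1]] := properP pM1.
have sxH : <[x]> \subset H by rewrite cycle_subG.
have [exH | [M2 max2 sxM2]] := maximal_exists sxH.
  by case/negP: ncH; apply/cyclicP; exists x.
have pM2 : M2 \proper H := maxgroupp max2.
have xM2 : x \in M2 by rewrite -cycle_subG.
have d12 : M1 :!=: M2 by apply: contraNneq xM1 => ->.
have nM1 := p_maximal_normal pH max1.
have nM2 := p_maximal_normal pH max2.
have ntM (M : {group gT}) : maximal M H -> M :!=: 1.
  move=> maxM; apply/eqP=> eM; have := p_maximal_index pH maxM.
  rewrite eM indexg1 => eH.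
  case/negP: ncH; apply: prime_cyclic; by rewrite eH.
have ntM1 := ntM _ max1; have ntM2 := ntM _ max2.
case: (eqVneq (M1 :&: M2) 1) => [tI | ntI].
  have eJ : M1 <*> M2 = H.
    apply/eqP; rewrite eqEproper join_subG (proper_sub pM1) (proper_sub pM2) /=.
    apply/negP=> pJ; case/maxgroupP: max1 => _ /(_ _ pJ (joing_subl _ _)) eJ1.
    case/maxgroupP: max2 => _ /(_ M1 pM1) eM.
    have sM21 : M2 \subset M1 by rewrite -eJ1 joing_subr.
    by rewrite eM ?eqxx in d12.
  have eMH : M1 * M2 = H by rewrite -norm_joinEr // (subset_trans (proper_sub pM2)) ?normal_norm.
  have cH : #|H| = (#|M1| * #|M2|)%N by rewrite -eMH TI_cardMg.
  have i1 := p_maximal_index pH max1; have i2 := p_maximal_index pH max2.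
  have L1 := Lagrange (proper_sub pM1); have L2 := Lagrange (proper_sub pM2).
  rewrite i1 in L1; rewrite i2 in L2.
  have cM2 : #|M2| = p.
    by apply/eqP; rewrite -(eqn_pmul2l (cardG_gt0 M1)) -cH L1.
  have cM1 : #|M1| = p.
    by apply/eqP; rewrite -(eqn_pmul2r (cardG_gt0 M2)) -cH -L2 mulnC.
  have abH : abelian H by apply: (card_p2group_abelian p_pr); rewrite cH cM1 cM2.
  have [y My ny1] := trivgPn _ ntM1.
  have [z Mz nz1] := trivgPn _ ntM2.
  have Hy : y \in H := subsetP (proper_sub pM1) y My.
  have Hz : z \in H := subsetP (proper_sub pM2) z Mz.
  have inI u : u \in M1 -> u \in M2 -> u = 1.
    move=> u1 u2; have : u \in M1 :&: M2 by rewrite inE u1 u2.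
    by rewrite tI => /set1P.
  apply: (@calD_ge3 _ H M1 M2 <[y * z]>%G) => //.
  - by rewrite -sub_abelian_normal // cycle_subG groupM.
  - rewrite properEneq cycle_subG groupM // andbT.
    by apply: contra ncH => /eqP <-; exact: cycle_cyclic.
  - rewrite /= cycle_eq1; apply: contra ny1 => /eqP yz1.
    have ey : y = z^-1 by rewrite -(mulgK z y) yz1 mul1g.
    by rewrite (inI y My) // ey groupV.
  - apply/eqP=> e; have : y * z \in M2 by rewrite /= e cycle_id.
    rewrite groupMr // => yM2; by rewrite (inI y My yM2) eqxx in ny1.
  - apply/eqP=> e; have : y * z \in M1 by rewrite -e cycle_id.
    rewrite groupMl // => zM1; by rewrite (inI z zM1 Mz) eqxx in nz1.
have pI : M1 :&: M2 \proper H := sub_proper_trans (subsetIl _ _) pM1.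
apply: (@calD_ge3 _ H M1 M2 (M1 :&: M2)%G) => //=.
- exact: normalI.
- apply/eqP=> e; have s12 : M2 \subset M1 by rewrite e subsetIl.
  case/maxgroupP: max2 => _ /(_ M1 pM1 s12) eM; by rewrite eM eqxx in d12.
- apply/eqP=> e; have s12 : M1 \subset M2 by rewrite -e subsetIr.
  case/maxgroupP: max1 => _ /(_ M2 pM2 s12) eM; by rewrite eM eqxx in d12.
Qed.

Lemma lift_nsn (gT : finGroupType) (G K : {group gT}) (Yb : {set coset_of K}) :
  K <| G -> K :!=: 1 -> Yb \in nsn_subgroups (G / K) ->
  exists Y : {group gT},
    [/\ gval Y \in nsn_subgroups G, K \subset Y, ~~ (Y \subset K) & Y / K = Yb].
Proof.
move=> nKG ntK; rewrite inE => /and4P[gYb sYbH ntYb nYb].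
pose YbG := Group gYb.
exists (coset K @*^-1 YbG)%G.
have eY : coset K @*^-1 YbG / K = Yb by rewrite cosetpreK.
have sKY : K \subset coset K @*^-1 YbG by apply: sub_cosetpre.
split=> //.
- rewrite inE groupP /=.
  have -> : coset K @*^-1 YbG \subset G.
    by rewrite -(quotientGK nKG) morphpreS.
  have -> /= : coset K @*^-1 YbG != 1.
    apply: contra ntK => /eqP e1; by rewrite -subG1 -e1.
  have sYbN : Yb \subset 'N_(G / K)(Yb) by rewrite subsetI sYbH (normG YbG).
  have pY : Yb \proper 'N_(G / K)(Yb) by rewrite properEneq eq_sym nYb.
  have [_ [gb gbN gbY]] := properP pY.
  have [gbH gbNY] := setIP gbN.
  case/morphimP: gbH => g Ng Gg egb.
  apply/eqP=> eN.
  have gN : g \in 'N_G(coset K @*^-1 YbG).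
    rewrite inE Gg; apply: (subsetP (morphpre_norm _ _)).
    by rewrite mem_morphpre //= -egb.
  rewrite eN in gN; case/morphpreP: gN => _ /=.
  by rewrite -egb (negbTE gbY).
- apply: contra ntYb => sYK.
  have h : YbG \subset [1 coset_of K] by rewrite /= -eY -(trivg_quotient K) quotientS.
  by move: h; rewrite subG1.
Qed.

Lemma exists_elt (gT : finGroupType) (G : {group gT}) :
  'Z(G) != 1 -> calD (G / 'Z(G)) = 2 ->
  exists x, [/\ x \in G, x \notin 'Z(G) & ~~ ('Z(G) \subset <[x]>)].
Proof.
move=> ntZ DH.
case: (boolP [exists x in G, (x \notin 'Z(G)) && ~~ ('Z(G) \subset <[x]>)]).
  by case/exists_inP=> x Gx /andP[]; exists x.
move/exists_inPn=> hyp; exfalso.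
have hyp' x : x \in G -> x \notin 'Z(G) -> 'Z(G) \subset <[x]>.
  by move=> Gx nZx; have := hyp x Gx; rewrite nZx /= negbK.
set Z := 'Z(G) in ntZ DH hyp'.
have nZG : Z <| G := center_normal G.
have gt1 : 1 < #|Z| by rewrite cardG_gt1.
have p_pr := pdiv_prime gt1; set p := pdiv #|Z| in p_pr.
have pZ : p %| #|Z| := pdiv_dvd _.
have p'Z y : y \in G -> p^'.-elt y -> y \in Z.
  move=> Gy p'y; apply/negPn/negP => nZy.
  have sZy := hyp' y Gy nZy.
  have := pgroupS sZy p'y => /pgroupP /(_ p p_pr pZ).
  by rewrite !inE eqxx.
have pH : p.-group (G / Z).
  apply/pgroupP => q q_pr qdvd.
  have [xb Hxb oxb] := Cauchy q_pr qdvd.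
  case/morphimP: Hxb => y Ny Gy exb.
  have Gy' : y.`_p^' \in G.
    have : <[y]> \subset G by rewrite cycle_subG.
    by move/subsetP; apply; exact: cycle_constt.
  have Zy' : y.`_p^' \in Z by apply: p'Z => //; exact: p_elt_constt.
  have e1 : xb.`_p^' = 1.
    by rewrite exb -(morph_constt (coset_morphism Z)) //= coset_id.
  have pxb : p.-elt xb by rewrite -p_eltNK; apply/constt1P.
  rewrite /p_elt oxb in pxb.
  apply: (pnatPpi pxb); rewrite (pi_of_prime q_pr q). by rewrite !inE.
have ncH : ~~ cyclic (G / Z).
  apply/negP => /cyclic_center_factor_abelian /center_idP eZ.
  by move: DH; rewrite /Z eZ trivg_quotient calD1.
by have := pgroup_noncyclic pH ncH; rewrite DH.
Qed.

Theorem mainTheorem13 (gT : finGroupType) (G : {group gT}) :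
  'Z(G) != 1 -> calD (G / 'Z(G)) = 2 -> 4 <= calD G - calD 'Z(G).
Proof.
move=> ntZ DH.
have [x [Gx nZx nsZx]] := exists_elt ntZ DH.
have nZG : 'Z(G) <| G := center_normal G.
have sZG : 'Z(G) \subset G := center_sub G.
have nZG' : G \subset 'N('Z(G)) := normal_norm nZG.
have cZG : 'Z(G) \subset 'C(G) := subsetIr _ _.
have cent (W : {set gT}) : W \subset 'Z(G) -> G \subset 'N(W).
  by move=> sWZ; apply: cents_norm; rewrite centsC (subset_trans sWZ).
have GneZ : G :!=: 'Z(G).
  apply/eqP => eGZ.
  have e : G / 'Z(G) = 1.
    apply/eqP; rewrite -subG1 -(trivg_quotient 'Z(G)) quotientS //.
    by rewrite {1}eGZ.
  by move: DH; rewrite e calD1.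
have : 1 < #|[set Y :^: (G / 'Z(G)) | Y in nsn_subgroups (G / 'Z(G))]|.
  by move: DH; rewrite /calD => ->.
case/card_gt1P => _ [_ [/imsetP[Yb1 Yb1n ->] /imsetP[Yb2 Yb2n ->] neq12]].
have [Y1 [Y1n sZY1 nY1Z eY1]] := lift_nsn nZG ntZ Yb1n.
have [Y2 [Y2n sZY2 nY2Z eY2]] := lift_nsn nZG ntZ Yb2n.
set S := nsn_subgroups G.
set A := [set Y :^: G | Y in S].
set A1 := [set W :^: G | W in nsn_subgroups 'Z(G)].
have nsnZ (W : {set gT}) : W \in nsn_subgroups 'Z(G) -> [/\ W \in S, W \subset 'Z(G) & W != 'Z(G)].
  rewrite !inE => /and4P[gW sWZ ntW nW].
  have neWZ : W != 'Z(G).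
    by apply: contra nW => /eqP ->; rewrite (setIidPl (normG _)).
  split=> //.
  rewrite gW ntW (subset_trans sWZ sZG) (setIidPl (cent W sWZ)) /=.
  by apply: contra GneZ => /eqP eGW; rewrite eqEsubset sZG andbT {1}eGW.
have cc1 : calD 'Z(G) <= #|nsn_subgroups 'Z(G)| := leq_imset_card _ _.
have cc2 : #|A1| = #|nsn_subgroups 'Z(G)|.
  apply: card_in_imset => W1 W2 /nsnZ[_ s1 _] /nsnZ[_ s2 _] e.
  by have := conj_mem W1 G; rewrite e => /(conj_norm (cent _ s2)).
have memA1 (c : {set {set gT}}) (R : {set gT}) : c \in A1 -> R \in c -> R \subset 'Z(G).
  by case/imsetP=> W /nsnZ[_ sW _] -> /(conj_norm (cent _ sW)) ->.
have Zcl (R : {set gT}) : R \in 'Z(G) :^: G -> R = 'Z(G) := conj_norm nZG'.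
have supY (Y : {group gT}) (R : {set gT}) : 'Z(G) \subset Y -> R \in Y :^: G -> 'Z(G) \subset R.
  move=> sZY /imsetP[g Gg ->].
  by rewrite -(normP (subsetP nZG' g Gg)) conjSg.
have inS (Y : {set gT}) : Y \in S -> Y :^: G \in A by move=> h; apply: imset_f.
have ZS : gval 'Z(G) \in S.
  by rewrite inE groupP sZG ntZ (setIidPl nZG').
have [z Zz nzx] : exists2 z, z \in 'Z(G) & z \notin <[x]> by apply/subsetPn.
have sxG : <[x]> \subset G by rewrite cycle_subG.
have xS : gval <[x]> \in S.
  rewrite inE groupP sxG cycle_eq1 /=.
  have -> : x != 1 by apply: contraNneq nZx => ->; exact: group1.
  apply/eqP=> eN; case/negP: nzx; rewrite -eN inE (subsetP sZG z Zz) /=.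
  apply: (subsetP (cent_sub _)); apply: (subsetP (centS sxG)).
  exact: (subsetP cZG).
have wit (R : {set gT}) (c : {set {set gT}}) (T : {set {set {set gT}}}) :
    R \in c -> (forall c', c' \in T -> R \notin c') -> c \notin T.
  by move=> Rc h; apply/negP => /h; rewrite Rc.
set cZ := 'Z(G) :^: G.
set c1 := gval Y1 :^: G.
set c2 := gval Y2 :^: G.
set c3 := <[x]> :^: G.
have n0 : cZ \notin A1.
  apply: (wit 'Z(G)); first exact: conj_mem.
  move=> c' /imsetP[W /nsnZ[_ sW nW] ->]; apply/negP => /(conj_norm (cent _ sW)) e.
  by rewrite e eqxx in nW.
have allZ (c' : {set {set gT}}) : c' \in cZ |: A1 -> forall R, R \in c' -> R \subset 'Z(G).
  rewrite in_setU1 => /predU1P[-> R /Zcl -> // | h R]; exact: memA1.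
have n1 : c1 \notin cZ |: A1.
  apply: (wit Y1); first exact: conj_mem.
  by move=> c' /allZ h; apply: contra nY1Z; exact: h.
have n2 : c2 \notin c1 |: (cZ |: A1).
  apply: (wit Y2); first exact: conj_mem.
  move=> c'; rewrite in_setU1 => /predU1P[-> | /allZ h]; last first.
    by apply: contra nY2Z; exact: h.
  apply/negP => /imsetP[g Gg eg].
  have : Yb2 \in Yb1 :^: (G / 'Z(G)).
    rewrite -eY2 -eY1 eg quotientJ ?(subsetP nZG') //.
    by apply: imset_f; exact: mem_quotient.
  by move/conj_eq => e; rewrite e eqxx in neq12.
have n3 : c3 \notin c2 |: (c1 |: (cZ |: A1)).
  apply: (wit <[x]>); first exact: conj_mem.
  move=> c'; rewrite in_setU1 => /predU1P[-> | ].
    by apply/negP => /(supY _ _ sZY2); apply/negP.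
  rewrite in_setU1 => /predU1P[-> | /allZ h].
    by apply/negP => /(supY _ _ sZY1); apply/negP.
  by apply/negP => /h; rewrite cycle_subG (negbTE nZx).
set B := c3 |: (c2 |: (c1 |: (cZ |: A1))).
have sBA : B \subset A.
  apply/subsetP => c; rewrite !in_setU1.
  case/predU1P => [->|]; first exact: inS.
  case/predU1P => [->|]; first exact: inS.
  case/predU1P => [->|]; first exact: inS.
  case/predU1P => [->|]; first exact: inS.
  by case/imsetP => W /nsnZ[WS _ _] ->; exact: inS.
have cB : #|B| = 4 + #|A1|.
  by rewrite /B !cardsU1 n3 n2 n1 n0.
have := subset_leq_card sBA; rewrite cB cc2 => h.
have eD : calD G = #|A| by [].
have h' : #|nsn_subgroups 'Z(G)| + 4 <= calD G by rewrite addnC eD.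
apply: leq_trans (leq_sub2l _ cc1); rewrite leq_subRL //.
exact: leq_trans (leq_addr _ _) h'.
Qed.
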